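(* Let $X$ be a real normed linear space and $x\in X\setminus\{\theta\}$. Let $y_1,y_2\in X\setminus\{\theta\}$ satisfy $x\perp_B^\varepsilon y_1$ and $x\perp_B^\varepsilon y_2$, where $\varepsilon\in[0,1)$ is such that $$0\le\varepsilon<\frac{2\|y_1+y_2\|}{3(\|y_1\|+\|y_2\|)}<1.$$ If $x$ is $\varepsilon$-smooth, then there exists $\varepsilon_1\in[0,1)$ such that $x\perp_B^{\varepsilon_1}(y_1+y_2)$.
   Context: For $\delta\in[0,1)$, $x\perp_B^\delta y$ (approximate Birkhoff–James orthogonality) means $\|x+\lambda y\|^2\ge\|x\|^2-2\delta\|x\|\|\lambda y\|$ for all $\lambda\in\mathbb{R}$. For $x\neq\theta$, $J(x)=\{f\in S_{X^*}:f(x)=\|x\|\}$, and $x$ is $\varepsilon$-smooth if $\sup_{f,g\in J(x)}\|f-g\|\le\varepsilon$. *)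

(* Defs.v *)
From HB Require Import structures.
From mathcomp Require Import all_boot all_order all_algebra.
From mathcomp Require Import all_classical all_reals all_analysis.
Set Implicit Arguments. Unset Strict Implicit. Unset Printing Implicit Defensive.
Import Order.TTheory GRing.Theory Num.Theory.
Import numFieldNormedType.Exports.
Local Open Scope classical_set_scope.
Local Open Scope ring_scope.

Definition bj_orth {R : realType} {X : normedModType R} (delta : R) (x y : X) : Prop :=
  forall l : R, `|x + l *: y| ^+ 2 >= `|x| ^+ 2 - 2 * delta * `|x| * `|l *: y|.

Definition is_dual {R : realType} {X : normedModType R} (f : X -> R) : Prop :=
  (forall (a : R) (u v : X), f (a *: u + v) = a * f u + f v) /\ continuous f.

Definition dnorm {R : realType} {X : normedModType R} (f : X -> R) : R :=
  sup [set `|f z| | z in [set z : X | `|z| <= 1]].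

Definition in_dual_sphere {R : realType} {X : normedModType R} (f : X -> R) : Prop :=
  is_dual f /\ dnorm f = 1.

Definition supp_funcs {R : realType} {X : normedModType R} (x : X) : set (X -> R) :=
  [set f | in_dual_sphere f /\ f x = `|x|].

Definition eps_smooth {R : realType} {X : normedModType R} (eps : R) (x : X) : Prop :=
  forall f g, supp_funcs x f -> supp_funcs x g -> dnorm (fun z => f z - g z) <= eps.

(* Main.v *)
Require Import Defs.
From HB Require Import structures.
From mathcomp Require Import all_boot all_order all_algebra.
From mathcomp Require Import all_classical all_reals all_analysis.
From mathcomp Require Import ring lra.
Import Order.TTheory GRing.Theory Num.Theory.
Import numFieldNormedType.Exports.
Local Open Scope classical_set_scope.
Local Open Scope ring_scope.

Definition ggood {R : realType} {X : normedModType R} (G : set (X * R)) : Prop :=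
  [/\ G (0, 0),
      (forall (s : R) z a w b, G (z, a) -> G (w, b) -> G (s *: z + w, s * a + b)),
      (forall z a b, G (z, a) -> G (z, b) -> a = b) &
      (forall z a, G (z, a) -> a <= `|z|)].

Definition gext {R : realType} {X : normedModType R} (G : set (X * R)) (y : X) (c : R) :
  set (X * R) :=
  [set u | exists m a t, G (m, a) /\ u = (m + t *: y, a + t * c)].

Lemma gext_sub {R : realType} {X : normedModType R} (G : set (X * R)) y c :
  G `<=` gext G y c.
Proof.
case=> m a Gma; exists m, a, 0; split => //.
by rewrite scale0r mul0r !addr0.
Qed.

Lemma gext_y {R : realType} {X : normedModType R} (G : set (X * R)) y c :
  G (0,0) -> gext G y c (y, c).
Proof. by move=> G0; exists 0, 0, 1; rewrite scale1r mul1r !add0r. Qed.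

Lemma gext_good {R : realType} {X : normedModType R} (G : set (X * R)) y c :
  ggood G -> (forall a, ~ G (y, a)) ->
  (forall m a, G (m, a) -> a + c <= `|m + y|) ->
  (forall m a, G (m, a) -> a - c <= `|m - y|) ->
  ggood (gext G y c).
Proof.
case=> G0 Glin Gfun Gdom ny hc1 hc2; split.
- exact: (@gext_sub _ _ G y c _ G0).
- move=> s _ _ _ _ [m [a [t [Gma [-> ->]]]]] [m' [a' [t' [Gma' [-> ->]]]]].
  exists (s *: m + m'), (s * a + a'), (s * t + t'); split; first exact: Glin.
  congr (_, _); last by ring.
  by rewrite scalerDr scalerDl scalerA; rewrite !addrA; congr (_ + _);
    rewrite -!addrA; congr (_ + _); rewrite addrC.
- move=> _ _ _ [m [a [t [Gma [-> ->]]]]] [m' [a' [t' [Gma' []]]]] Em ->.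
  have [tt'|ntt'] := eqVneq t t'.
  + subst t'; move: Em => /addIr Em; subst m'.
    by rewrite (Gfun _ _ _ Gma Gma').
  + exfalso; apply: (ny ((t - t')^-1 * (a' - a))).
    have -> : y = (t - t')^-1 *: (m' - m).
      apply: (@scalerI _ _ (t - t')); first by rewrite subr_eq0.
      rewrite scalerA mulfV ?subr_eq0 // scale1r scalerBl.
      have -> : m' = m + t *: y - t' *: y by rewrite Em addrK.
      by rewrite -addrA -opprD (addrC (t' *: y)) (addrC m (t *: y)) addrKA.

    rewrite -[X in G (_, X)]addr0 -[X in G (X, _)]addr0; apply: (Glin) => //.
    rewrite addrC [a' - a]addrC.
    have -> : - m + m' = (-1) *: m + m' by rewrite scaleN1r.
    have -> : - a + a' = (-1) * a + a' by rewrite mulN1r.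
    exact: Glin.
- move=> _ _ [m [a [t [Gma [-> ->]]]]].
  have [t0|t0|->] := ltrgt0P t.
  + have Gm : G (t^-1 *: m, t^-1 * a).
      by rewrite -[X in G (X, _)]addr0 -[X in G (_, X)]addr0; apply: (Glin).
    have := hc1 _ _ Gm.
    have -> : t^-1 *: m + y = t^-1 *: (m + t *: y).
      by rewrite scalerDr scalerA mulVf ?gt_eqF // scale1r.
    rewrite normrZ gtr0_norm ?invr_gt0 // => h.
    have tn0 : t != 0 by rewrite gt_eqF.
    have -> : a + t * c = t * (t^-1 * a + c) by field.
    have -> : `|m + t *: y| = t * (t^-1 * `|m + t *: y|) by field.
    by rewrite ler_pM2l.
  + have s0 : 0 < - t by rewrite oppr_gt0.
    have Gm : G ((- t)^-1 *: m, (- t)^-1 * a).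
      by rewrite -[X in G (X, _)]addr0 -[X in G (_, X)]addr0; apply: (Glin).
    have := hc2 _ _ Gm.
    have -> : (- t)^-1 *: m - y = (- t)^-1 *: (m + t *: y).
      rewrite scalerDr scalerA invrN mulNr mulVf ?lt_eqF // scaleN1r.
      done.
    rewrite normrZ gtr0_norm ?invr_gt0 // => h.
    have tn0 : - t != 0 by rewrite gt_eqF.
    have tn0' : t != 0 by rewrite lt_eqF.
    have -> : a + t * c = (- t) * ((- t)^-1 * a - c) by field.
    have -> : `|m + t *: y| = (- t) * ((- t)^-1 * `|m + t *: y|) by field.
    by rewrite ler_pM2l.
  + by rewrite scale0r mul0r !addr0; apply: (Gdom).
Qed.

Lemma ggood_two {R : realType} {X : normedModType R} (G0 : set (X * R))
  (F : set (set (X * R))) :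
  ggood G0 -> F `<=` (fun A => ggood (A `|` G0)) -> total_on F subset ->
  forall u v, ((\bigcup_(B in F) B) `|` G0) u -> ((\bigcup_(B in F) B) `|` G0) v ->
  exists K, [/\ ggood K, K `<=` ((\bigcup_(B in F) B) `|` G0), K u & K v].
Proof.
move=> g0 FP Ftot.
have H1 : forall u, ((\bigcup_(B in F) B) `|` G0) u ->
    exists B, (B = set0 \/ F B) /\ (B `|` G0) u.
  move=> u [[B FB Bu]|G0u].
  - by exists B; split; [right|left].
  - by exists set0; split; [left|right].
have gB : forall B, (B = set0 \/ F B) -> ggood (B `|` G0).
  by move=> B [->|FB]; [rewrite set0U | exact: FP].
have sB : forall B, (B = set0 \/ F B) -> B `|` G0 `<=` (\bigcup_(B in F) B) `|` G0.
  move=> B [->|FB]; first by rewrite set0U => z; right.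
  by move=> z [Bz|Gz]; [left; exists B | right].
move=> u v /H1 [B1 [hB1 u1]] /H1 [B2 [hB2 v2]].
have [le12|le21] : B1 `<=` B2 \/ B2 `<=` B1.
  case: hB1 => [->|F1]; first by left.
  case: hB2 => [->|F2]; first by right.
  exact: Ftot.
- exists (B2 `|` G0); split => //; [exact: gB|exact: sB|].
  by case: u1 => [/le12 ?|?]; [left|right].
- exists (B1 `|` G0); split => //; [exact: gB|exact: sB|].
  by case: v2 => [/le21 ?|?]; [left|right].
Qed.

Lemma ggood_chain {R : realType} {X : normedModType R} (G0 : set (X * R))
  (F : set (set (X * R))) :
  ggood G0 -> F `<=` (fun A => ggood (A `|` G0)) -> total_on F subset ->
  ggood ((\bigcup_(B in F) B) `|` G0).
Proof.
move=> g0 FP Ftot; have two := @ggood_two _ _ G0 F g0 FP Ftot.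
have g00 : G0 (0,0) by case: g0.
split.
- by right.
- move=> s z a w b Uz Uw.
  have [K [[_ Klin _ _] KU Kz Kw]] := two _ _ Uz Uw.
  by apply: KU; apply: Klin.
- move=> z a b Uz Uw.
  have [K [[_ _ Kfun _] KU Kz Kw]] := two _ _ Uz Uw.
  exact: Kfun Kz Kw.
- move=> z a Uz.
  have [K [[_ _ _ Kdom] KU Kz _]] := two _ _ Uz Uz.
  exact: Kdom Kz.
Qed.

Lemma ggood_total {R : realType} {X : normedModType R} (G : set (X * R)) :
  ggood G -> (forall B, G `<` B -> ~ ggood B) -> forall y, exists a, G (y, a).
Proof.
move=> gG maxG y; apply: contrapT => /forallNP ny.
have [G0 Glin Gfun Gdom] := gG.
pose S := [set r | exists m a, G (m, a) /\ r = a - `|m - y|].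
have key : forall m a m' a', G (m, a) -> G (m', a') ->
    a - `|m - y| <= `|m' + y| - a'.
  move=> m a m' a' Gma Gma'.
  have := Glin 1 _ _ _ _ Gma Gma'; rewrite scale1r mul1r => /Gdom h.
  have : `|m + m'| <= `|m - y| + `|m' + y|.
    have -> : m + m' = (m - y) + (m' + y).
      by rewrite addrACA addNr addr0.
    exact: ler_normD.
  move=> h2; lra.
have S0 : S !=set0 by exists (0 - `|0 - y|), 0, 0.
have Sub : ubound S (`|0 + y| - 0).
  by move=> _ [m [a [Gma ->]]]; apply: key Gma G0.
have hS : has_sup S by split => //; exists (`|0 + y| - 0).
pose c := sup S.
have hc1 : forall m a, G (m, a) -> a + c <= `|m + y|.
  move=> m a Gma.
  have : c <= `|m + y| - a.
    by apply: ge_sup => // _ [m' [a' [Gma' ->]]]; apply: key Gma' Gma.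
  lra.
have hc2 : forall m a, G (m, a) -> a - c <= `|m - y|.
  move=> m a Gma.
  have : a - `|m - y| <= c by apply: sup_upper_bound => //; exists m, a.
  lra.
have gE := @gext_good _ _ G y c gG ny hc1 hc2.
apply: (maxG _ _ gE); split; first exact: (@gext_sub _ _ G y c).
by move=> /(_ _ (@gext_y _ _ G y c G0)); apply: ny.
Qed.

Lemma hahn_banach {R : realType} {X : normedModType R} (G0 : set (X * R)) :
  ggood G0 -> exists F : X -> R,
    [/\ (forall (a : R) u v, F (a *: u + v) = a * F u + F v),
        (forall z, F z <= `|z|) &
        (forall z a, G0 (z, a) -> F z = a)].
Proof.
move=> g0.
have [A [PA maxA]] := @Zorn_bigcup _ (fun A => ggood (A `|` G0))
  (fun F FP Ftot => @ggood_chain _ _ G0 F g0 FP Ftot).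
have maxG : forall B, (A `|` G0) `<` B -> ~ ggood B.
  move=> B [AB nBA] gB; apply: (maxA B).
  - split; first by move=> z Az; apply: AB; left.
    by move=> BA; apply: nBA => z /BA; left.
  - have -> : B `|` G0 = B by apply: setUidl => z G0z; apply: AB; right.
    done.
have tot : forall y, exists a, (A `|` G0) (y, a) := @ggood_total _ _ _ PA maxG.
have [F HF] := choice tot.
have [_ Glin Gfun Gdom] := PA.
exists F; split.
- move=> a u v; apply: Gfun (HF _) _; exact: Glin.
- by move=> z; apply: Gdom (HF z).
- by move=> z a G0z; apply: Gfun (HF z) _; right.
Qed.
Lemma conv {R : realType} {X : normedModType R} (x y : X) s t : t != 0 ->
  x + s *: y = (s / t) *: (x + t *: y) + (1 - s / t) *: x.
Proof.
move=> t0. rewrite scalerDr scalerA divfK // scalerBl scale1r.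
by rewrite [RHS]addrC addrA subrK.
Qed.

Lemma Dpos {R : realType} {X : normedModType R} (eps : R) (x y : X) :
  x != 0 -> 0 <= eps -> bj_orth eps x y ->
  forall t, 0 < t -> `|x| - eps * t * `|y| <= `|x + t *: y|.
Proof.
move=> x0 e0 hb t t0; rewrite leNgt; apply/negP => hN.
set nx := `|x|; set ny := `|y|; set N := `|x + t *: y|.
have nx0 : 0 < nx by rewrite normr_gt0.
have ny0 : 0 <= ny by rewrite normr_ge0.
have N0 : 0 <= N by rewrite normr_ge0.
set d := (nx - eps * t * ny - N) / t.
have d0 : 0 < d by rewrite divr_gt0 // subr_gt0.
have Nd : N = nx - t * (eps * ny + d).
  by rewrite /d; field; rewrite gt_eqF.
set k := eps * ny + d.
have k0 : 0 < k by rewrite /k; nra.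
have [s [s0 [st sk]]] : exists s, 0 < s /\ s <= t /\ s * k ^+ 2 <= nx * d.
  have k20 : 0 < k ^+ 2 by rewrite exprn_gt0.
  case: (lerP t (nx * d / k ^+ 2)) => h.
  - exists t; split => //; split => //.
    by rewrite -ler_pdivlMr.
  - exists (nx * d / k ^+ 2); split; first by rewrite divr_gt0 // mulr_gt0.
    split; first exact: ltW.
    by rewrite divfK ?gt_eqF.
set M := `|x + s *: y|.
have M0 : 0 <= M by rewrite normr_ge0.
have hM : M <= (s / t) * N + (1 - s / t) * nx.
  have h1 : 0 <= s / t by rewrite divr_ge0 // ltW.
  have h2 : 0 <= 1 - s / t by rewrite subr_ge0 ler_pdivrMr // mul1r.
  rewrite /M (conv x y s t (lt0r_neq0 t0)).
  apply: le_trans (ler_normD _ _) _.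
  by rewrite [X in X + _]normrZ [X in _ + X]normrZ (ger0_norm h1) (ger0_norm h2).
have hM2 : M <= nx - s * k.
  have -> : nx - s * k = (s / t) * N + (1 - s / t) * nx.
    by rewrite Nd /k; field; rewrite gt_eqF.
  exact: hM.
have hb2 := hb s.
rewrite -/M normrZ gtr0_norm // -/ny -/nx in hb2.
have hsq : M ^+ 2 <= (nx - s * k) ^+ 2.
  by rewrite ler_sqr // ?nnegrE // (le_trans M0 hM2).
have : 2 * s * nx * d <= s ^+ 2 * k ^+ 2.
  have : nx ^+ 2 - 2 * eps * nx * (s * ny) <= (nx - s * k) ^+ 2 := le_trans hb2 hsq.
  rewrite /k; nra.
move=> h.
have : 2 * nx * d <= s * k ^+ 2.
  rewrite -(ler_pM2l s0); nra.
nra.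
Qed.

Lemma bj_opp {R : realType} {X : normedModType R} (eps : R) (x y : X) :
  bj_orth eps x y -> bj_orth eps x (- y).
Proof.
move=> hb l; have := hb (- l).
by rewrite scalerN -scaleNr.
Qed.

Lemma Elem {R : realType} {X : normedModType R} (eps : R) (x y : X) :
  x != 0 -> 0 <= eps -> bj_orth eps x y ->
  forall a, a * `|x| - eps * `|y| <= `|a *: x + y|.
Proof.
move=> x0 e0 hb a.
have nx0 : 0 < `|x| by rewrite normr_gt0.
have ny0 : 0 <= `|y| by rewrite normr_ge0.
case: (lerP a 0) => ha.
- apply: le_trans (normr_ge0 _); nra.
- have ai : 0 < a^-1 by rewrite invr_gt0.
  have := @Dpos _ _ eps x y x0 e0 hb a^-1 ai.
  have -> : a *: x + y = a *: (x + a^-1 *: y).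
    by rewrite scalerDr scalerA mulfV ?gt_eqF // scale1r.
  rewrite normrZ gtr0_norm // => h.
  have an0 : a != 0 by rewrite gt_eqF.
  have -> : a * `|x| - eps * `|y| = a * (`|x| - eps * a^-1 * `|y|) by field.
  by rewrite ler_pM2l.
Qed.

Lemma notspan {R : realType} {X : normedModType R} (eps : R) (x y : X) :
  x != 0 -> y != 0 -> 0 <= eps -> eps < 1 -> bj_orth eps x y ->
  forall b, y <> b *: x.
Proof.
move=> x0 y0 e0 e1 hb b yb.
have nx0 : 0 < `|x| by rewrite normr_gt0.
have b0 : b != 0 by apply: contraNneq y0 => b0; rewrite yb b0 scale0r.
have ny : `|y| = `|b| * `|x| by rewrite yb normrZ.
case: (ltrgt0P b) => hb0; last by move: b0; rewrite hb0 eqxx.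
- have := @Elem _ _ eps x (- y) x0 e0 (@bj_opp _ _ eps x y hb) b.
  rewrite normrN yb subrr normr0 -yb ny gtr0_norm //; have := mulr_gt0 hb0 nx0; nra.
- have := @Elem _ _ eps x y x0 e0 hb (- b).
  rewrite yb scaleNr addNr normr0 -yb ny ltr0_norm //; have : 0 < - b * `|x| by rewrite mulr_gt0 // oppr_gt0.
  nra.
Qed.

Lemma exists_f {R : realType} {X : normedModType R} (eps : R) (x y : X) :
  x != 0 -> y != 0 -> 0 <= eps -> eps < 1 -> bj_orth eps x y ->
  exists F : X -> R,
    [/\ (forall (a : R) u v, F (a *: u + v) = a * F u + F v),
        (forall z, F z <= `|z|), F x = `|x| & `|F y| <= eps * `|y|].
Proof.
move=> x0 y0 e0 e1 hb.
have nx0 : 0 < `|x| by rewrite normr_gt0.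
have ny0 : 0 <= `|y| by rewrite normr_ge0.
have E1 := @Elem _ _ eps x y x0 e0 hb.
have E2 := @Elem _ _ eps x (- y) x0 e0 (@bj_opp _ _ eps x y hb).
rewrite normrN in E2.
pose G00 := [set u : X * R | exists a, u = (a *: x, a * `|x|)].
have g00 : ggood G00.
  split.
  - by exists 0; rewrite scale0r mul0r.
  - move=> s _ _ _ _ [a [-> ->]] [b [-> ->]].
    by exists (s * a + b); rewrite scalerDl scalerA mulrDl mulrA.
  - move=> _ _ _ [a [-> ->]] [b [Eab ->]].
    have : (a - b) *: x = 0 by rewrite scalerBl Eab subrr.
    move/eqP; rewrite scaler_eq0 (negbTE x0) orbF subr_eq0 => /eqP -> //.
  - move=> _ _ [a [-> ->]].
    by rewrite normrZ ler_wpM2r ?normr_ge0 // ler_norm.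
have ny : forall a, ~ G00 (y, a).
  by move=> a [b [yb _]]; apply: (@notspan _ _ eps x y x0 y0 e0 e1 hb b).
pose S := [set r | exists a, r = a * `|x| - `|a *: x - y|].
have S0 : S !=set0 by exists (0 * `|x| - `|0 *: x - y|), 0.
have Sub : ubound S (eps * `|y|).
  by move=> _ [a ->]; have := E2 a; lra.
have hS : has_sup S by split => //; exists (eps * `|y|).
pose c := Num.max (sup S) (- (eps * `|y|)).
have hc1 : forall m a, G00 (m, a) -> a + c <= `|m + y|.
  move=> _ _ [a [-> ->]].
  suff : c <= `|a *: x + y| - a * `|x| by lra.
  rewrite ge_max; apply/andP; split.
  - apply: ge_sup => // _ [b ->].
    have : (a + b) * `|x| <= `|b *: x - y| + `|a *: x + y|.
      apply: le_trans (ler_normD _ _).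
      have -> : b *: x - y + (a *: x + y) = (a + b) *: x.
        by rewrite addrACA addNr addr0 addrC scalerDl.
      by rewrite normrZ ler_wpM2r ?normr_ge0 // ler_norm.
    lra.
  - have := E1 a; lra.
have hc2 : forall m a, G00 (m, a) -> a - c <= `|m - y|.
  move=> _ _ [a [-> ->]].
  have : a * `|x| - `|a *: x - y| <= sup S by apply: sup_upper_bound => //; exists a.
  have : sup S <= c by rewrite le_max lexx.
  lra.
have g1 := @gext_good _ _ G00 y c g00 ny hc1 hc2.
have [F [Flin Fle FG]] := @hahn_banach _ _ _ g1.
exists F; split => //.
- apply: FG; apply: gext_sub; exists 1; by rewrite scale1r mul1r.
- rewrite (FG y c); last by apply: gext_y; case: g00.
  rewrite ler_norml; apply/andP; split.
  + by rewrite le_max lexx orbT.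
  + rewrite ge_max; apply/andP; split; last by have := mulr_ge0 e0 ny0; lra.
    exact: ge_sup.
Qed.
Lemma lip_cont {R : realType} {X : normedModType R} (F : X -> R) :
  (forall u v, `|F u - F v| <= `|u - v|) -> continuous F.
Proof.
move=> hF z; apply/cvgrPdist_lt => e e0.
apply/nbhs_ballP; exists e => //= u.
rewrite -ball_normE /= => h.
exact: le_lt_trans (hF z u) h.
Qed.

Lemma lin0 {R : realType} {X : normedModType R} {f : X -> R} :
  (forall (a : R) u v, f (a *: u + v) = a * f u + f v) -> f 0 = 0.
Proof.
move=> hf; have := hf 1 0 0; rewrite scale1r addr0 mul1r => h.
lra.
Qed.

Lemma linZ {R : realType} {X : normedModType R} {f : X -> R} :
  (forall (a : R) u v, f (a *: u + v) = a * f u + f v) ->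
  forall a u, f (a *: u) = a * f u.
Proof. by move=> hf a u; have := hf a u 0; rewrite addr0 (lin0 hf) addr0. Qed.

Lemma linD {R : realType} {X : normedModType R} {f : X -> R} :
  (forall (a : R) u v, f (a *: u + v) = a * f u + f v) ->
  forall u v, f (u + v) = f u + f v.
Proof. by move=> hf u v; have := hf 1 u v; rewrite scale1r mul1r. Qed.

Lemma linB {R : realType} {X : normedModType R} {f : X -> R} :
  (forall (a : R) u v, f (a *: u + v) = a * f u + f v) ->
  forall u v, f (u - v) = f u - f v.
Proof.
move=> hf u v; rewrite linD // -scaleN1r linZ //; lra.
Qed.

Lemma dnorm_hs {R : realType} {X : normedModType R} {f : X -> R} {K : R} :
  0 <= K -> (forall z, `|f z| <= K * `|z|) ->
  has_sup [set `|f z| | z in [set z : X | `|z| <= 1]] /\ dnorm f <= K.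
Proof.
move=> K0 hK.
have ne : [set `|f z| | z in [set z : X | `|z| <= 1]] !=set0.
  by exists `|f 0|, 0 => //=; rewrite normr0.
have ub : ubound [set `|f z| | z in [set z : X | `|z| <= 1]] K.
  move=> _ [z /= z1 <-]; apply: le_trans (hK z) _.
  by rewrite -[leRHS]mulr1 ler_wpM2l.
split; first by split => //; exists K.
exact: ge_sup.
Qed.

Lemma dnorm_bound {R : realType} {X : normedModType R} {f : X -> R} :
  (forall (a : R) u v, f (a *: u + v) = a * f u + f v) ->
  has_sup [set `|f z| | z in [set z : X | `|z| <= 1]] ->
  forall z, `|f z| <= dnorm f * `|z|.
Proof.
move=> hf hs z.
have [->|z0] := eqVneq z 0.
  by rewrite (lin0 hf) !normr0 mulr0.
have nz : 0 < `|z| by rewrite normr_gt0.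
have w1 : `| (`|z|^-1) *: z| <= 1.
  by rewrite normrZ normrV ?unitfE ?gt_eqF // normr_id mulVf ?gt_eqF.
have mem : [set `|f z| | z in [set z : X | `|z| <= 1]] `|f (`|z|^-1 *: z)|.
  by exists (`|z|^-1 *: z).
have := sup_upper_bound hs mem.
rewrite linZ // normrM normrV ?unitfE ?gt_eqF // normr_id => h.
rewrite /dnorm; have nzi : `|z| != 0 by rewrite gt_eqF.
have -> : `|f z| = `|z| * (`|z|^-1 * `|f z|) by field.
by rewrite mulrC ler_pM2r.
Qed.

Lemma in_J {R : realType} {X : normedModType R} (f : X -> R) (x : X) :
  x != 0 ->
  (forall (a : R) u v, f (a *: u + v) = a * f u + f v) ->
  (forall z, f z <= `|z|) -> f x = `|x| -> supp_funcs x f.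
Proof.
move=> x0 hf hle hx.
have ab : forall z, `|f z| <= 1 * `|z|.
  move=> z; rewrite mul1r ler_norml hle andbT.
  have := hle (- z); rewrite normrN -scaleN1r linZ //; lra.
have [hs dle] := dnorm_hs ler01 ab.
rewrite /supp_funcs /in_dual_sphere /is_dual /=.
split; last exact: hx.
split; first split => //.
- apply: lip_cont => u v; rewrite -linB //.
  have := ab (u - v); by rewrite mul1r.
- apply/eqP; rewrite eq_le dle /=.
  have nz : 0 < `|x| by rewrite normr_gt0.
  have w1 : `| (`|x|^-1) *: x| <= 1.
    by rewrite normrZ normrV ?unitfE ?gt_eqF // normr_id mulVf ?gt_eqF.
  have mem : [set `|f z| | z in [set z : X | `|z| <= 1]] `|f (`|x|^-1 *: x)|.
    by exists (`|x|^-1 *: x).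
  have := sup_upper_bound hs mem.
  by rewrite linZ // hx normrM normrV ?unitfE ?gt_eqF // normr_id mulVf ?gt_eqF.
Qed.

Lemma J_le {R : realType} {X : normedModType R} (f : X -> R) (x : X) :
  supp_funcs x f -> forall z, `|f z| <= `|z|.
Proof.
move=> [[[hf _] dn] _].
have hs : has_sup [set `|f z| | z in [set z : X | `|z| <= 1]].
  apply: contrapT => hn; move: dn; rewrite /dnorm sup_out //.
  by move/eqP; rewrite eq_sym oner_eq0.
by move=> z; have := dnorm_bound hf hs z; rewrite dn mul1r.
Qed.

Lemma easy_dir {R : realType} {X : normedModType R} (f : X -> R) (x y : X) (e1 : R) :
  (forall (a : R) u v, f (a *: u + v) = a * f u + f v) ->
  (forall z, f z <= `|z|) -> f x = `|x| -> 0 <= e1 -> `|f y| <= e1 * `|y| ->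
  bj_orth e1 x y.
Proof.
move=> hf hle hx e0 hy l.
have h1 := hle (x + l *: y).
rewrite addrC hf hx normrZ in h1 *.
have nx := normr_ge0 x; have ny := normr_ge0 y; have nl := normr_ge0 l.
have N0 := normr_ge0 (l *: y + x).
have hly : - (e1 * (`|l| * `|y|)) <= l * f y.
  have : `|l * f y| <= e1 * (`|l| * `|y|).
    by rewrite normrM mulrCA ler_wpM2l.
  by rewrite ler_norml => /andP [].
case: (lerP 0 (`|x| - e1 * (`|l| * `|y|))) => hr.
- have h2 : `|x| - e1 * (`|l| * `|y|) <= `|l *: y + x| by lra.
  have := ler_pM hr hr h2 h2.
  set N := `|l *: y + x|; set P := `|l| * `|y|; rewrite /GRing.exp /=; nra.
- have hP : 0 <= e1 * (`|l| * `|y|) by rewrite mulr_ge0 // mulr_ge0.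
  set N := `|l *: y + x|; set P := `|l| * `|y|; rewrite /GRing.exp /=.
  have : 0 <= N * N by rewrite mulr_ge0.
  have h3 : 0 <= `|x| * (e1 * P - `|x|) by rewrite mulr_ge0 // subr_ge0 /P; apply: ltW; lra.
  nra.
Qed.

Theorem theorem4p2 (R : realType) (X : normedModType R) (x y1 y2 : X) (eps : R) :
  x != 0 -> y1 != 0 -> y2 != 0 ->
  0 <= eps -> eps < 1 ->
  eps < 2 * `|y1 + y2| / (3 * (`|y1| + `|y2|)) ->
  2 * `|y1 + y2| / (3 * (`|y1| + `|y2|)) < 1 ->
  bj_orth eps x y1 -> bj_orth eps x y2 ->
  eps_smooth eps x ->
  exists eps1 : R, 0 <= eps1 /\ eps1 < 1 /\ bj_orth eps1 x (y1 + y2).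
Proof.
move=> x0 y10 y20 e0 e1 heps _ hb1 hb2 hsm.
have na : 0 < `|y1| by rewrite normr_gt0.
have nb : 0 < `|y2| by rewrite normr_gt0.
have nab : 0 < 3 * (`|y1| + `|y2|) by rewrite mulr_gt0 // addr_gt0.
rewrite ltr_pdivlMr // in heps.
have ny : 0 < `|y1 + y2|.
  by rewrite lt_def normr_ge0 andbT normr_eq0; apply/negP => /eqP h;
    move: heps; rewrite h normr0 mulr0; have := mulr_ge0 e0 (ltW nab); lra.
have [f1 [f1lin f1le f1x f1y]] := @exists_f _ _ eps x y1 x0 y10 e0 e1 hb1.
have [f2 [f2lin f2le f2x f2y]] := @exists_f _ _ eps x y2 x0 y20 e0 e1 hb2.
have J1 := @in_J _ _ f1 x x0 f1lin f1le f1x.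
have J2 := @in_J _ _ f2 x x0 f2lin f2le f2x.
have hd := hsm _ _ J1 J2.
pose g := fun z => f1 z - f2 z.
have glin : forall (a : R) u v, g (a *: u + v) = a * g u + g v.
  by move=> a u v; rewrite /g f1lin f2lin; ring.
have gb : forall z, `|g z| <= 2 * `|z|.
  move=> z; apply: le_trans (ler_normB _ _) _.
  have := @J_le _ _ f1 x J1 z; have := @J_le _ _ f2 x J2 z; lra.
have [hs _] := dnorm_hs (ler0n _ 2) gb.
have gle : forall z, `|f1 z - f2 z| <= eps * `|z|.
  move=> z; apply: le_trans (dnorm_bound glin hs z) _.
  by rewrite ler_wpM2r ?normr_ge0.
set a := `|y1|; set b := `|y2|; set N := `|y1 + y2|.
have [f [flin [fle [fx fy]]]] : exists f : X -> R,
   (forall (a : R) u v, f (a *: u + v) = a * f u + f v) /\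
   (forall z, f z <= `|z|) /\ f x = `|x| /\ `|f (y1 + y2)| < N.
  case: (lerP b a) => hab.
  - exists f1; split => //; split => //; split => //.
    rewrite linD //; apply: le_lt_trans (ler_normD _ _) _.
    have := gle y2; have := ler_normD (f1 y2 - f2 y2) (f2 y2).
    rewrite subrK => h3 h4.
    rewrite -/a -/b -/N in f1y f2y h4 heps *.
    have : 0 <= eps * (a - b) by rewrite mulr_ge0 // subr_ge0.
    lra.
  - exists f2; split => //; split => //; split => //.
    rewrite linD //; apply: le_lt_trans (ler_normD _ _) _.
    have := gle y1; have := ler_normD (f1 y1) (f2 y1 - f1 y1).
    rewrite addrC subrK distrC => h3 h4.
    rewrite -/a -/b -/N in f1y f2y h4 heps *.
    have : 0 <= eps * (b - a) by rewrite mulr_ge0 // subr_ge0 ltW.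
    lra.
exists (`|f (y1 + y2)| / N); split; first by rewrite divr_ge0 // ltW.
split; first by rewrite ltr_pdivrMr // mul1r.
apply: (@easy_dir _ _ f x (y1 + y2) _ flin fle fx); first by rewrite divr_ge0 // ltW.
by rewrite divfK ?gt_eqF.
Qed.
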